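(* If $L\subseteq\Sigma^\omega$ is LPBA-recognizable, then there are finitely many Parikh-recognizable languages $U_1,\dots,U_n\subseteq\Sigma^*$ and regular languages $V_1,\dots,V_n\subseteq\Sigma^*$ with $L=\bigcup_{i=1}^nU_iV_i^\omega$.
   Context: For $V\subseteq\Sigma^*$, $V^\omega=\{w_1w_2\cdots\mid w_i\in V\setminus\{\varepsilon\}\}$. A semi-linear set in $\mathbb{N}^d$ (resp. $(\mathbb{N}\cup\{\infty\})^d$) is a finite union of sets $\{b_0+\sum_{j=1}^\ell b_jz_j\mid z_j\in\mathbb{N}\}$ with $b_j\in\mathbb{N}^d$ (resp. $(\mathbb{N}\cup\{\infty\})^d$), with arithmetic $z+\infty=\infty+z=\infty+\infty=\infty$, $z\cdot\infty=\infty\cdot z=\infty$ for $z>0$, $0\cdot\infty=\infty\cdot0=0$. A Parikh automaton (PA) of dimension $d$ is $(Q,\Sigma,q_0,\Delta,F,C)$ with finite $Q$, $q_0\in Q$, $F\subseteq Q$, finite $\Delta\subseteq Q\times\Sigma\times\mathbb{N}^d\times Q$, semi-linear $C\subseteq\mathbb{N}^d$; it accepts a finite word $x_1\cdots x_n$ if there is a run $r_i=(p_{i-1},x_i,\mathbf{v}_i,p_i)\in\Delta$, $p_0=q_0$, with $p_n\in F$ and $\sum_i\mathbf{v}_i\in C$; Parikh-recognizable languages are those accepted by PA. A limit Parikh–Büchi automaton (LPBA) is such a tuple but with $C\subseteq(\mathbb{N}\cup\{\infty\})^d$ semi-linear; a run $r_1r_2\cdots$ on an infinite word ($r_i=(p_{i-1},\alpha_i,\mathbf{v}_i,p_i)$,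 $p_0=q_0$) is accepting if $p_i\in F$ for infinitely many $i$ and $\rho(r)\in C$, where the $j$-th component of $\rho(r)$ is $\infty$ if infinitely many $\mathbf{v}_i$ have nonzero $j$-th component and otherwise is the finite sum of the $j$-th components. $L$ is LPBA-recognizable if it is the set of infinite words with an accepting run of some LPBA. *)

(* Defs.v *)
From Stdlib Require List.
From mathcomp Require Import all_boot.
Set Implicit Arguments. Unset Strict Implicit. Unset Printing Implicit Defensive.

Definition nvec (d : nat) := 'I_d -> nat.

Definition in_linear (d : nat) (b0 : nvec d) (ps : seq (nvec d)) (v : nvec d) : Prop :=
  exists zs : seq nat, size zs = size ps /\
    forall j : 'I_d, v j = b0 j + \sum_(k < size ps) nth (fun _ => 0) ps k j * nth 0 zs k.

Definition semilinear (d : nat) (C : nvec d -> Prop) : Prop :=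
  exists S : seq (nvec d * seq (nvec d)),
    forall v, C v <-> exists2 p, List.In p S & in_linear p.1 p.2 v.

Inductive enat := Fin of nat | Inf.

Definition eadd (x y : enat) : enat :=
  match x, y with Fin a, Fin b => Fin (a + b) | _, _ => Inf end.
Definition emul (x y : enat) : enat :=
  match x, y with
  | Fin a, Fin b => Fin (a * b)
  | Fin 0, Inf | Inf, Fin 0 => Fin 0
  | _, _ => Inf
  end.

Definition evec (d : nat) := 'I_d -> enat.

Definition in_linear_ext (d : nat) (b0 : evec d) (ps : seq (evec d)) (v : evec d) : Prop :=
  exists zs : seq nat, size zs = size ps /\
    forall j : 'I_d, v j = eadd (b0 j)
      (\big[eadd/Fin 0]_(k < size ps) emul (nth (fun _ => Fin 0) ps k j) (Fin (nth 0 zs k))).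

Definition semilinear_ext (d : nat) (C : evec d -> Prop) : Prop :=
  exists S : seq (evec d * seq (evec d)),
    forall v, C v <-> exists2 p, List.In p S & in_linear_ext p.1 p.2 v.

Definition lang (Sigma : Type) := seq Sigma -> Prop.
Definition olang (Sigma : Type) := (nat -> Sigma) -> Prop.

Definition trans (Q Sigma : Type) (d : nat) := (Q * Sigma * {ffun 'I_d -> nat} * Q)%type.
Definition tsrc  (Q Sigma : Type) d (t : trans Q Sigma d) : Q := t.1.1.1.
Definition tlab  (Q Sigma : Type) d (t : trans Q Sigma d) : Sigma := t.1.1.2.
Definition tvec  (Q Sigma : Type) d (t : trans Q Sigma d) : {ffun 'I_d -> nat} := t.1.2.
Definition ttgt  (Q Sigma : Type) d (t : trans Q Sigma d) : Q := t.2.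

Fixpoint fin_run (Q Sigma : Type) d (Delta : seq (trans Q Sigma d))
    (q : Q) (w : seq Sigma) (r : seq (trans Q Sigma d)) (p : Q) : Prop :=
  match w, r with
  | [::], [::] => p = q
  | a :: w', t :: r' =>
      List.In t Delta /\ tsrc t = q /\ tlab t = a /\ fin_run Delta (ttgt t) w' r' p
  | _, _ => False
  end.

Definition PA_accepts (Q : finType) (Sigma : Type) d (q0 : Q)
    (Delta : seq (trans Q Sigma d)) (F : pred Q) (C : nvec d -> Prop) (w : seq Sigma) : Prop :=
  exists (r : seq (trans Q Sigma d)) (p : Q),
    fin_run Delta q0 w r p /\ p \in F /\ C (fun j => \sum_(t <- r) tvec t j).

Definition parikh_recognizable (Sigma : finType) (U : lang Sigma) : Prop :=
  exists (Q : finType) (d : nat) (q0 : Q) (Delta : seq (trans Q Sigma d))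
         (F : pred Q) (C : nvec d -> Prop),
    semilinear C /\ forall w, U w <-> PA_accepts q0 Delta F C w.

Fixpoint nfa_run (Q Sigma : Type) (delta : Q -> Sigma -> Q -> bool)
    (q : Q) (w : seq Sigma) (F : pred Q) : Prop :=
  match w with
  | [::] => F q
  | a :: w' => exists q', delta q a q' /\ nfa_run delta q' w' F
  end.

Definition regular (Sigma : finType) (V : lang Sigma) : Prop :=
  exists (Q : finType) (q0 : Q) (delta : Q -> Sigma -> Q -> bool) (F : pred Q),
    forall w, V w <-> nfa_run delta q0 w F.

Definition infinitely_often (P : nat -> Prop) : Prop := forall N, exists i, N <= i /\ P i.

Definition rho_is (Q Sigma : Type) d (r : nat -> trans Q Sigma d) (v : evec d) : Prop :=
  forall j : 'I_d,
    (infinitely_often (fun i => tvec (r i) j <> 0) -> v j = Inf) /\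
    (~ infinitely_often (fun i => tvec (r i) j <> 0) ->
       exists N, (forall i, N <= i -> tvec (r i) j = 0) /\
                 v j = Fin (\sum_(i < N) tvec (r i) j)).

Definition LPBA_accepts (Q : finType) (Sigma : Type) d (q0 : Q)
    (Delta : seq (trans Q Sigma d)) (F : pred Q) (C : evec d -> Prop) (a : nat -> Sigma) : Prop :=
  exists r : nat -> trans Q Sigma d,
    tsrc (r 0) = q0 /\
    (forall i, List.In (r i) Delta /\ tlab (r i) = a i /\ ttgt (r i) = tsrc (r i.+1)) /\
    infinitely_often (fun i => ttgt (r i) \in F) /\
    (exists v, rho_is r v /\ C v).

Definition LPBA_recognizable (Sigma : finType) (L : olang Sigma) : Prop :=
  exists (Q : finType) (d : nat) (q0 : Q) (Delta : seq (trans Q Sigma d))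
         (F : pred Q) (C : evec d -> Prop),
    semilinear_ext C /\ forall a, L a <-> LPBA_accepts q0 Delta F C a.

(* V^omega = { w1 w2 ... | w_i in V \ {eps} } *)
Definition omega_power (Sigma : Type) (V : lang Sigma) : olang Sigma :=
  fun a => exists ws : nat -> seq Sigma,
    (forall k, V (ws k) /\ ws k <> [::]) /\
    forall k j, j < size (ws k) ->
      a (\sum_(i < k) size (ws i) + j) = nth (a 0) (ws k) j.

Definition concat_omega (Sigma : Type) (U : lang Sigma) (W : olang Sigma) : olang Sigma :=
  fun a => exists2 u, U u & exists2 b, W b &
    forall i, a i = if i < size u then nth (a 0) u i else b (i - size u).

(* Main.v *)
Require Import Defs.
From Stdlib Require Import List Classical ClassicalEpsilon FunctionalExtensionality.
From mathcomp Require Import all_boot zify.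
Set Implicit Arguments. Unset Strict Implicit. Unset Printing Implicit Defensive.

Definition isInf (x : enat) : bool := if x is Inf then true else false.
Definition efin (x : enat) : nat := if x is Fin n then n else 0.

Lemma isInf_eadd x y : isInf (eadd x y) = isInf x || isInf y.
Proof. by case: x; case: y. Qed.

Lemma isInfE x : isInf x -> x = Inf.
Proof. by case: x. Qed.

Lemma finE x : ~~ isInf x -> x = Fin (efin x).
Proof. by case: x. Qed.

Lemma bigeadd n (F : 'I_n -> enat) :
  \big[eadd/Fin 0]_(k < n) F k =
  if [exists k, isInf (F k)] then Inf else Fin (\sum_(k < n) efin (F k)).
Proof.
have H1 : isInf (\big[eadd/Fin 0]_(k < n) F k) = [exists k, isInf (F k)].
  transitivity (\big[orb/false]_(k < n) isInf (F k)).
    by apply: (big_morph isInf) => //; exact: isInf_eadd.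
  by rewrite big_orE.
case: ifP => H; first by apply: isInfE; rewrite H1.
have H1' : ~~ isInf (\big[eadd/Fin 0]_(k < n) F k) by rewrite H1 H.
move: H1'.
apply: (big_ind2 (fun x m => ~~ isInf x -> x = Fin m)) => //.
  move=> x1 x2 y1 y2 Hx Hy; rewrite isInf_eadd negb_or => /andP[/Hx -> /Hy ->].
  by [].
by move=> i _; apply: finE.
Qed.

Lemma isInf_emul p z : isInf (emul p (Fin z)) = isInf p && (0 < z).
Proof. by case: p => [a|]; case: z => [|z] //; case: a. Qed.

Lemma efin_emul p z : efin (emul p (Fin z)) = efin p * z.
Proof. by case: p => [a|]; case: z => [|z] //=; case: a. Qed.

Lemma eadd_Fin a b m : eadd a b = Fin m -> [/\ a = Fin (efin a), b = Fin (efin b) & m = efin a + efin b].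
Proof. by case: a => [a|]; case: b => [b|] //= [<-]. Qed.

Lemma eadd_Inf a b : eadd a b = Inf -> isInf a || isInf b.
Proof. by case: a => [a|]; case: b => [b|]. Qed.

Fixpoint masks n : seq (seq bool) :=
  if n is n'.+1 then map (cons true) (masks n') ++ map (cons false) (masks n')
  else [:: [::]].

Lemma masks_in (m : seq bool) : In m (masks (size m)).
Proof.
elim: m => [|b m IH] /=; first by left.
apply/in_app_iff; case: b; [left|right]; apply/in_map_iff; by exists m.
Qed.

Definition dflt d : evec d := fun _ => Fin 0.
Definition ext d (J : {set 'I_d}) (x : nvec d) : evec d :=
  fun j => if j \in J then Inf else Fin (x j).

Definition validb d (J : {set 'I_d}) (b0 : evec d) (ps : seq (evec d)) (m : seq bool) : bool :=
  [forall j : 'I_d, if j \in J then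
     isInf (b0 j) || [exists k : 'I_(size ps), nth false m k && isInf (nth (@dflt d) ps k j)]
   else ~~ isInf (b0 j) &&
     [forall k : 'I_(size ps), nth false m k ==> ~~ isInf (nth (@dflt d) ps k j)]].

Definition lbase d (J : {set 'I_d}) (b0 : evec d) (ps : seq (evec d)) (m : seq bool) : nvec d :=
  fun j => if j \in J then 0 else
    efin (b0 j) + \sum_(k < size ps) nth false m k * efin (nth (@dflt d) ps k j).

Definition lgens d (J : {set 'I_d}) (ps : seq (evec d)) (m : seq bool) : seq (nvec d) :=
  mkseq (fun k => fun j => if j \in J then 0 else nth false m k * efin (nth (@dflt d) ps k j)) (size ps)
  ++ [seq (fun j' => (j \in J) && (j == j') : nat) | j <- enum 'I_d].

Definition Sfor d (J : {set 'I_d}) (S : seq (evec d * seq (evec d))) : seq (nvec d * seq (nvec d)) :=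
  flat_map (fun p => flat_map (fun m => if validb J p.1 p.2 m then [:: (lbase J p.1 p.2 m, lgens J p.2 m)] else [::])
     (masks (size p.2))) S.

Lemma size_lgens d (J : {set 'I_d}) ps m : size (lgens J ps m) = size ps + d.
Proof. by rewrite size_cat size_mkseq size_map size_enum_ord. Qed.

Lemma sum_lgens d (J : {set 'I_d}) ps m (zs : seq nat) j :
  \sum_(k < size (lgens J ps m)) nth (fun _ => 0) (lgens J ps m) k j * nth 0 zs k =
  \sum_(k < size ps) (if j \in J then 0 else nth false m k * efin (nth (@dflt d) ps k j)) * nth 0 zs k
  + (j \in J) * nth 0 zs (size ps + j).
Proof.
rewrite -(big_mkord xpredT (fun k => nth (fun _ => 0) (lgens J ps m) k j * nth 0 zs k)).
rewrite size_lgens big_mkord big_split_ord /=; congr (_ + _).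
  apply: eq_bigr => k _; rewrite nth_cat size_mkseq ltn_ord nth_mkseq //.
rewrite (bigD1 j) //= big1 ?addn0.
  rewrite nth_cat size_mkseq ltnNge leq_addr /= addKn.
  rewrite (nth_map j) ?size_enum_ord // nth_ord_enum eqxx andbT //.
move=> i /negbTE ne; rewrite nth_cat size_mkseq ltnNge leq_addr /= addKn.
by rewrite (nth_map j) ?size_enum_ord // nth_ord_enum; case: eqP; rewrite ?andbF // => eij; move: ne; rewrite eij eqxx.
Qed.

Lemma nth_mask (zs : seq nat) k : nth false [seq 0 < z | z <- zs] k = (0 < nth 0 zs k).
Proof. by elim: zs k => [|z zs IH] [|k] //=; rewrite nth_nil. Qed.

Lemma semilinear_proj d (C : evec d -> Prop) (J : {set 'I_d}) :
  semilinear_ext C -> semilinear (fun x => C (ext J x)).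
Proof.
case=> S HS; exists (Sfor J S) => x; rewrite HS; split.
- case=> [[b0 ps] inS [zs [Hsz Hv]]]; simpl in Hsz, Hv.
  set m := [seq 0 < z | z <- zs].
  have Hm k : nth false m k = (0 < nth 0 zs k) by exact: nth_mask.
  exists (lbase J b0 ps m, lgens J ps m).
    apply/in_flat_map; exists (b0, ps); split => //; apply/in_flat_map; exists m; split.
      by have := masks_in m; rewrite size_map Hsz.
    suff -> : validb J b0 ps m by left.
    apply/forallP => j; have := Hv j; rewrite /ext bigeadd; case: (j \in J).
      case: (b0 j) => [bj|] //=.
      case E: [exists _, _] => // _.
      move/existsP: E => [k]; rewrite isInf_emul => /andP[h1 h2].
      by apply/existsP; exists k; rewrite Hm h2 h1.
    case E: [exists _, _]; first by case: (b0 j).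
    move/esym/eadd_Fin => [-> _ _] /=; apply/forallP => k; apply/implyP; rewrite Hm => hz.
    by apply/negP => hi; move/negbT/existsPn: E => /(_ k); rewrite isInf_emul hi hz.
  exists (map predn zs ++ map x (enum 'I_d)).
  split; first by rewrite size_cat !size_map Hsz -enumT size_enum_ord size_lgens.
  move=> j /=; rewrite sum_lgens /lbase /=.
  have Hn : nth 0 (map predn zs ++ map x (enum 'I_d)) (size ps + j) = x j.
    rewrite nth_cat size_map Hsz ltnNge leq_addr /= addKn.
    by rewrite (nth_map j) ?size_enum_ord // nth_ord_enum.
  case jJ: (j \in J).
    rewrite big1 ?Hn; first by rewrite !add0n mul1n.
    by move=> k _; exact: mul0n.
  rewrite mul0n addn0.
  have := Hv j; rewrite /ext jJ bigeadd.
  case E: [exists _, _]; first by case: (b0 j).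
  move/esym/eadd_Fin => [_ _ ->] /=; rewrite -addnA -big_split /=; congr (_ + _).
  apply: eq_bigr => k _; rewrite efin_emul Hm nth_cat size_map Hsz ltn_ord.
  rewrite (nth_map 0) ?Hsz //.
  by case: (nth 0 zs k) => [|z] /=; rewrite ?muln0 // mul1n mulnS.
- case=> [p' inS' Hlin].
  move/in_flat_map: inS' => [[b0 ps] [inS /in_flat_map [m [_ Hif]]]].
  case V: (validb J b0 ps m) in Hif; last by case: Hif.
  case: Hif => [E|[]]; subst p'.
  exists (b0, ps) => //=.
  case: Hlin => /= zs' [Hsz' Hx].
  exists (mkseq (fun k => nth false m k * (nth 0 zs' k).+1) (size ps)).
  split; first by rewrite size_mkseq.
  move=> j; rewrite bigeadd.
  move/forallP: V => /(_ j); rewrite /ext; case jJ: (j \in J).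
    case/orP => [hb|/existsP [k /andP[hm hi]]]; first by rewrite (isInfE hb).
    case: existsP => [_|H]; first by case: (b0 j).
    by exfalso; apply: H; exists k; rewrite nth_mkseq // isInf_emul hi hm.
  case/andP => hb /forallP hk.
  case: existsP => [[k]|_].
    rewrite nth_mkseq // isInf_emul; have := hk k.
    case: (nth false m k) => /=; last by rewrite mul0n andbF.
    by move/negbTE ->.
  rewrite (finE hb) /=; congr Fin.
  rewrite Hx sum_lgens /lbase jJ mul0n addn0 -addnA -big_split; congr (_ + _).
  apply: eq_bigr => k _; rewrite nth_mkseq // efin_emul.
  by case: (nth false m k) => /=; rewrite ?mul0n ?muln0 // !mul1n mulnS.
Qed.

Lemma In_mem (T : eqType) (x : T) (s : seq T) : In x s <-> x \in s.
Proof.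
elim: s => [|y s IH] //=; rewrite in_cons; split.
  by case=> [->|/IH ->]; rewrite ?eqxx ?orbT.
by case/orP => [/eqP ->|/IH]; [left|right].
Qed.

Lemma fin_run_cat (Q Sigma : Type) d (D : seq (trans Q Sigma d)) p w1 r1 p' w2 r2 p'' :
  fin_run D p w1 r1 p' -> fin_run D p' w2 r2 p'' -> fin_run D p (w1 ++ w2) (r1 ++ r2) p''.
Proof.
elim: w1 p r1 => [|x w1 IH] p r1.
  by case: r1 => //= ->.
case: r1 => [|t r1] //= [? [? [? H]]] H2.
by do 3 (split => //); apply: IH H H2.
Qed.

Lemma fin_run_nth (Q Sigma : Type) d (D : seq (trans Q Sigma d)) p w r p' t0 x0 :
  fin_run D p w r p' -> size r = size w /\
  forall i, i < size r -> [/\ In (nth t0 r i) D, tlab (nth t0 r i) = nth x0 w i &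
     tsrc (nth t0 r i) = (if i is k.+1 then ttgt (nth t0 r k) else p)].
Proof.
elim: w p r => [|x w IH] p r.
  by case: r => //= _; split.
case: r => [|t r] //= [Hin [Hs [Hl H]]].
have [Hsz Hn] := IH _ _ H; split; first by rewrite Hsz.
case=> [|i] /= hi; first by split.
have [h1 h2 h3] := Hn i hi; split => //; rewrite h3; by case: i {h1 h2 h3 hi}.
Qed.

Lemma run_seg (Q Sigma : Type) d (D : seq (trans Q Sigma d)) (r : nat -> trans Q Sigma d) (a : nat -> Sigma) :
  (forall i, In (r i) D /\ tlab (r i) = a i /\ ttgt (r i) = tsrc (r i.+1)) ->
  forall n m, fin_run D (tsrc (r m)) (map a (iota m n)) (map r (iota m n)) (tsrc (r (m + n))).
Proof.
move=> H; elim=> [|n IH] m /=; first by rewrite addn0.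
have [h1 [h2 h3]] := H m; do 3 (split => //); rewrite h3 -addSnnS; exact: IH.
Qed.

Lemma bound (I : finType) (P : I -> nat -> Prop) :
  (forall j, exists n, P j n) -> exists M, forall j, exists2 n, n < M & P j n.
Proof.
move=> H.
suff [M HM] : exists M, forall j, j \in enum I -> exists2 n, n < M & P j n.
  by exists M => j; apply: HM; rewrite mem_enum.
elim: (enum I) => [|j s [M HM]]; first by exists 0.
have [n Pn] := H j; exists (maxn M n.+1) => k; rewrite in_cons => /orP [/eqP ->|/HM [m lm Pm]].
  by exists n => //; rewrite leq_max ltnSn orbT.
by exists m => //; rewrite leq_max lm.
Qed.

Lemma pigeon (Q : finType) (f : nat -> Q) : exists q, infinitely_often (fun i => f i = q).
Proof.
apply: NNPP => H.
have H' : forall q, exists N, forall i, N <= i -> f i <> q.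
  move=> q; apply: NNPP => H1; apply: H; exists q => N; apply: NNPP => H2; apply: H1; exists N.
  by move=> i hi E; apply: H2; exists i.
have [M HM] := bound H'.
have [n ln Pn] := HM (f M); exact: (Pn M (ltnW ln)).
Qed.

Lemma sum_extend (f : nat -> nat) N P : (forall i, N <= i -> f i = 0) -> N <= P ->
  \sum_(i < P) f i = \sum_(i < N) f i.
Proof.
move=> Hz; elim: P => [|P IH]; first by rewrite leqn0 => /eqP ->.
rewrite leq_eqVlt => /orP [/eqP -> //|hP].
by rewrite big_ord_recr /= Hz // addn0 IH.
Qed.

Definition sumvec (Q Sigma : Type) d (rr : seq (trans Q Sigma d)) : nvec d :=
  fun j => \sum_(t <- rr) tvec t j.

Definition nz (Q Sigma : Type) d (J : {set 'I_d}) (t : trans Q Sigma d) : bool :=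
  [forall j, (j \notin J) ==> (tvec t j == 0)].

Definition supp (Q Sigma : Type) d (rr : seq (trans Q Sigma d)) : {set 'I_d} :=
  [set j | has (fun t => tvec t j != 0) rr].

Definition Ulang (Q Sigma : Type) d (q0 : Q) (Delta : seq (trans Q Sigma d)) (C : evec d -> Prop)
  (q : Q) (J : {set 'I_d}) : lang Sigma :=
  fun u => exists rr, fin_run Delta q0 u rr q /\ C (ext J (sumvec rr)).

Definition Vlang (Q Sigma : finType) d (Delta : seq (trans Q Sigma d)) (F : pred Q)
  (q : Q) (J : {set 'I_d}) : lang Sigma :=
  fun w => exists rr, fin_run Delta q w rr q /\ all (nz J) rr /\
     has (fun t => ttgt t \in F) rr /\ J \subset supp rr.

Lemma supp_nil (Q Sigma : Type) d : supp (nil : seq (trans Q Sigma d)) = set0.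
Proof. by apply/setP => j; rewrite !inE. Qed.

Lemma supp_cons (Q Sigma : Type) d (t : trans Q Sigma d) rr :
  supp (t :: rr) = [set j | tvec t j != 0] :|: supp rr.
Proof. by apply/setP => j; rewrite !inE. Qed.

Definition vdelta (Q Sigma : finType) d (Delta : seq (trans Q Sigma d)) (F : pred Q) (J : {set 'I_d})
  (st : Q * {set 'I_d} * bool) (x : Sigma) (st' : Q * {set 'I_d} * bool) : bool :=
  let: (p, s, b) := st in let: (p', s', b') := st' in
  has (fun t => [&& tsrc t == p, tlab t == x, ttgt t == p', nz J t &
                 (s' == s :|: [set j | tvec t j != 0]) && (b' == b || (ttgt t \in F))]) Delta.

Definition vfin (Q : finType) d (q : Q) (J : {set 'I_d}) (st : Q * {set 'I_d} * bool) : bool :=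
  let: (p, s, b) := st in [&& p == q, J \subset s & b].

Lemma vrun (Q Sigma : finType) d (Delta : seq (trans Q Sigma d)) (F : pred Q) (q : Q) (J : {set 'I_d}) w :
  forall p s b, nfa_run (vdelta Delta F J) (p, s, b) w (vfin q J) <->
  exists rr, fin_run Delta p w rr q /\ all (nz J) rr /\
     (b || has (fun t => ttgt t \in F) rr) /\ J \subset s :|: supp rr.
Proof.
elim: w => [|x w IH] p s b /=.
  split.
    case/and3P => /eqP -> Js bb; exists [::]; split => //=.
    by rewrite bb supp_nil setU0.
  case=> [[|t rr] [E [_ [bb Js]]]] //=; simpl in E; subst.
  by move: bb Js; rewrite supp_nil setU0 orbF eqxx => -> ->.
split.
  case=> [[[p' s'] b']] [/hasP [t tin /and5P [/eqP ts /eqP tx /eqP tp nzt /andP [/eqP es /eqP eb]]]].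
  move/IH => [rr [fr [ar [br Jr]]]].
  exists (t :: rr); split.
    rewrite /=; split; first by apply/In_mem.
    by rewrite tp.
  split; first by rewrite /= nzt.
  split; first by move: br; rewrite eb /= orbA.
  by rewrite supp_cons setUA -es.
case=> [[|t rr] [H1 [H2 [bb Js]]]] //.
case: H1 => tin [ts [tx fr]]; case/andP: H2 => nzt ar.
exists (ttgt t, s :|: [set j | tvec t j != 0], b || (ttgt t \in F)); split.
  apply/hasP; exists t; first by apply/In_mem.
  by rewrite ts tx !eqxx nzt.
apply/IH; exists rr; split => //; split => //; split; first by rewrite -orbA.
by rewrite -setUA -supp_cons.
Qed.

Lemma V_regular (Q Sigma : finType) d (Delta : seq (trans Q Sigma d)) (F : pred Q) (q : Q) (J : {set 'I_d}) :
  regular (Vlang Delta F q J).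
Proof.
exists (Q * {set 'I_d} * bool)%type, (q, set0, false), (vdelta Delta F J), (vfin q J) => w.
rewrite vrun /Vlang; split; case=> rr [h1 [h2 [h3 h4]]]; exists rr; do 3 (split => //).
  by rewrite set0U.
by rewrite set0U in h4.
Qed.

Lemma U_parikh (Q Sigma : finType) d (q0 : Q) (Delta : seq (trans Q Sigma d)) (C : evec d -> Prop) q J :
  semilinear_ext C -> parikh_recognizable (Ulang q0 Delta C q J).
Proof.
move=> HC; exists Q, d, q0, Delta, (fun p => p == q), (fun x => C (ext J x)).
split; first exact: semilinear_proj.
move=> u; split.
  by case=> rr [fr Cr]; exists rr, q; split => //; split => //; rewrite unfold_in /=.
case=> rr [p [fr [pq Cr]]]; exists rr.
by move: pq; rewrite unfold_in /= => /eqP pq; subst p.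
Qed.

Lemma fwd (Q Sigma : finType) d (q0 : Q) (Delta : seq (trans Q Sigma d)) (F : pred Q)
  (C : evec d -> Prop) a :
  LPBA_accepts q0 Delta F C a ->
  exists q J, concat_omega (Ulang q0 Delta C q J) (omega_power (Vlang Delta F q J)) a.
Proof.
case=> r [r0 [Hr [IOF [v [Hrho Cv]]]]].
pose J := [set j | isInf (v j)].
have HJ j : j \in J -> infinitely_often (fun i => tvec (r i) j <> 0).
  rewrite inE => hj; apply: NNPP => nIO; have [_ /(_ nIO) [N [_ E]]] := Hrho j.
  by rewrite E in hj.
have HnJ j : j \notin J -> exists N, (forall i, N <= i -> tvec (r i) j = 0) /\
                                     v j = Fin (\sum_(i < N) tvec (r i) j).
  rewrite inE => hj; have [H1 H2] := Hrho j; apply: H2 => io.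
  by rewrite (H1 io) in hj.
have [M HM] := @bound _ (fun j n => j \notin J -> (forall i, n <= i -> tvec (r i) j = 0) /\
                                     v j = Fin (\sum_(i < n) tvec (r i) j))
  (fun j => match boolP (j \in J) with
            | AltTrue hj => ex_intro _ 0 (fun hn => False_ind _ (negP hn hj))
            | AltFalse hj => let: ex_intro N HN := HnJ j hj in ex_intro _ N (fun _ => HN) end).
have Z j i : j \notin J -> M <= i -> tvec (r i) j = 0.
  move=> hj hi; have [n ln Pn] := HM j; apply: (Pn hj).1; apply: leq_trans hi.
  exact: ltnW.
have [q IOq] := pigeon (fun i => tsrc (r i)).
have Hnext p : exists p', [/\ p < p', tsrc (r p') = q,
     has (fun t => ttgt t \in F) (map r (iota p (p' - p))) &
     J \subset supp (map r (iota p (p' - p)))].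
  have [iF [piF FiF]] := IOF p.
  have [m Hm] := @bound _ (fun j n => j \in J -> p <= n /\ tvec (r n) j <> 0)
    (fun j => match boolP (j \in J) with
            | AltTrue hj => let: ex_intro i Hi := HJ j hj p in ex_intro _ i (fun _ => Hi)
            | AltFalse hj => ex_intro _ 0 (fun hn => False_ind _ (negP hj hn)) end).
  have [p' [le Hq]] := IOq (maxn m iF.+1).
  have mp' : m <= p' by apply: leq_trans le; rewrite leq_maxl.
  have iFp' : iF < p' by apply: leq_trans le; rewrite leq_maxr.
  have pp' : p < p' by apply: leq_ltn_trans iFp'.
  exists p'; split => //.
    apply/hasP; exists (r iF) => //; apply/map_f; rewrite mem_iota piF /=.
    by rewrite subnKC // ltnW.
  apply/subsetP => j hj; rewrite inE; have [n ln Pn] := Hm j; have [pn nzn] := Pn hj.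
  apply/hasP; exists (r n); last by apply/eqP.
  apply/map_f; rewrite mem_iota pn subnKC ?(ltnW pp') //; exact: leq_trans ln mp'.
have [nxt Hnxt] : exists nxt : nat -> nat, forall p, [/\ p < nxt p, tsrc (r (nxt p)) = q,
     has (fun t => ttgt t \in F) (map r (iota p (nxt p - p))) &
     J \subset supp (map r (iota p (nxt p - p)))].
  exists (fun p => proj1_sig (constructive_indefinite_description _ (Hnext p))).
  move=> p; exact: (proj2_sig (constructive_indefinite_description _ (Hnext p))).
have [p0 [Mp0 q0p]] := IOq M.
pose pos k := iter k nxt p0.
have pos_lt k : pos k < pos k.+1 by have [] := Hnxt (pos k).
have pos_ge k : p0 <= pos k.
  elim: k => [//|k IH]; apply: leq_trans IH _; exact: ltnW.
have pos_q k : tsrc (r (pos k)) = q by case: k => [//|k]; have [] := Hnxt (pos k).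
have pos_sum k : \sum_(l < k) (pos l.+1 - pos l) = pos k - p0.
  elim: k => [|k IH]; first by rewrite big_ord0 subnn.
  rewrite big_ord_recr /= IH; have := pos_lt k; have := pos_ge k; rewrite /pos /=; lia.
pose ws k := map a (iota (pos k) (pos k.+1 - pos k)).
exists q, J.
exists (map a (iota 0 p0)).
  exists (map r (iota 0 p0)); split.
    by have := run_seg Hr p0 0; rewrite r0 add0n q0p.
  suff -> : ext J (sumvec (map r (iota 0 p0))) = v by [].
  apply: functional_extensionality => j; rewrite /ext /sumvec.
  case: ifP => hj; first by rewrite inE in hj; rewrite (isInfE hj).
  have [n ln Pn] := HM j; have [Zn Vn] := Pn (negbT hj).
  rewrite Vn big_map; congr Fin.
  have -> : iota 0 p0 = index_iota 0 p0 by rewrite /index_iota subn0.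
  rewrite big_mkord; apply: (@sum_extend (fun i => tvec (r i) j) n p0) => //.
  by apply: leq_trans Mp0; apply: ltnW.
exists (fun i => a (p0 + i)).
  exists ws; split.
    move=> k; split.
      exists (map r (iota (pos k) (pos k.+1 - pos k))); split.
        have := run_seg Hr (pos k.+1 - pos k) (pos k).
        by rewrite subnKC ?(ltnW (pos_lt k)) // !pos_q.
      have [_ _ h3 h4] := Hnxt (pos k); split; last by split.
      apply/allP => t /mapP [i]; rewrite mem_iota => /andP [hi _] ->.
      apply/forallP => j; apply/implyP => hj; apply/eqP; apply: Z hj _.
      by apply: leq_trans Mp0 (leq_trans (pos_ge k) hi).
    move/(f_equal size); rewrite size_map size_iota; have := pos_lt k; rewrite /pos /=; lia.
  move=> k j; rewrite size_map size_iota => hj.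
  rewrite (eq_bigr (fun i : 'I_k => pos i.+1 - pos i)); last by move=> i _; rewrite size_map size_iota.
  rewrite pos_sum (nth_map 0) ?size_iota // nth_iota //.
  congr a; have := pos_ge k; rewrite /pos /=; lia.
move=> i; rewrite size_map size_iota; case: ifP => hi.
  by rewrite (nth_map 0) ?size_iota // nth_iota.
congr a; move/negbT: hi; lia.
Qed.

Lemma all_flat (T : Type) (P : pred T) (rs : nat -> seq T) l :
  (forall k, all P (rs k)) -> all P (flatten (map rs l)).
Proof. by move=> H; elim: l => [|k l IH] //=; rewrite all_cat H IH. Qed.

Lemma bwd (Q Sigma : finType) d (q0 : Q) (Delta : seq (trans Q Sigma d)) (F : pred Q)
  (C : evec d -> Prop) q J a :
  concat_omega (Ulang q0 Delta C q J) (omega_power (Vlang Delta F q J)) a ->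
  LPBA_accepts q0 Delta F C a.
Proof.
case=> u [ru [fru Cu]] [b [ws [Hws Hb]] Ha].
have Hrs k : {rk | fin_run Delta q (ws k) rk q /\ all (nz J) rk /\
    has (fun t => ttgt t \in F) rk /\ J \subset supp rk}.
  apply: constructive_indefinite_description; exact: (Hws k).1.
pose rs k := proj1_sig (Hrs k).
have Prs k : fin_run Delta q (ws k) (rs k) q /\ all (nz J) (rs k) /\
    has (fun t => ttgt t \in F) (rs k) /\ J \subset supp (rs k) := proj2_sig (Hrs k).
pose R n := ru ++ flatten (map rs (iota 0 n)).
pose W n := u ++ flatten (map ws (iota 0 n)).
have RS n : R n.+1 = R n ++ rs n.
  by rewrite /R -addn1 iotaD map_cat flatten_cat /= cats0 catA.
have WS n : W n.+1 = W n ++ ws n.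
  by rewrite /W -addn1 iotaD map_cat flatten_cat /= cats0 catA.
have fR n : fin_run Delta q0 (W n) (R n) q.
  elim: n => [|n IH]; first by rewrite /R /W /= !cats0.
  by rewrite RS WS; apply: fin_run_cat IH (Prs n).1.
have sizeW n : size (W n) = size u + \sum_(l < n) size (ws l).
  elim: n => [|n IH]; first by rewrite /W /= cats0 big_ord0 addn0.
  by rewrite WS size_cat IH big_ord_recr /= addnA.
pose t0 : trans Q Sigma d := (q0, a 0, [ffun => 0], q0).
have sizeR n : size (R n) = size (W n) := (fin_run_nth t0 (a 0) (fR n)).1.
have szn n : n <= \sum_(l < n) size (ws l).
  elim: n => [|n IH] //; rewrite big_ord_recr /= -addn1; apply: leq_add IH _.
  rewrite lt0n size_eq0; apply/eqP; exact: (Hws n).2.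
have szR n : n + size ru <= size (R n).
  by rewrite sizeR sizeW (fin_run_nth t0 (a 0) fru).1 addnC leq_add2l.
have Wnth n i : i < size (W n) -> nth (a 0) (W n) i = a i.
  elim: n i => [|n IH] i.
    by rewrite /W /= cats0 => hi; rewrite (Ha i) hi.
  rewrite WS nth_cat size_cat; case: ifP => h hi; first exact: IH.
  have hu : size u <= i by move/negbT: h; rewrite sizeW; lia.
  rewrite (Ha i) ltnNge hu /=.
  have -> : i - size u = \sum_(l < n) size (ws l) + (i - size (W n)).
    by move/negbT: h; rewrite sizeW; lia.
  rewrite Hb; last by move/negbT: h; move: hi; lia.
  apply: set_nth_default; move/negbT: h; move: hi; lia.
pose r i := nth t0 (R i.+1) i.
have Rpre n m : n <= m -> exists X, R m = R n ++ X.
  move=> nm; rewrite /R -(subnKC nm) iotaD map_cat flatten_cat catA; eexists; reflexivity.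
have rnth n i : i < size (R n) -> r i = nth t0 (R n) i.
  move=> hi; have [X EX] := Rpre n (maxn n i.+1) (leq_maxl _ _).
  have [Y EY] := Rpre i.+1 (maxn n i.+1) (leq_maxr _ _).
  have hi' : i < size (R i.+1) by apply: leq_trans (szR i.+1); rewrite leq_addr.
  rewrite /r; transitivity (nth t0 (R (maxn n i.+1)) i).
    by rewrite EY nth_cat hi'.
  by rewrite EX nth_cat hi.
have block N t : t \in rs N -> exists i, N <= i /\ r i = t.
  case/(nthP t0) => j hj <-; exists (size (R N) + j); split.
    by apply: leq_trans (leq_addr _ _); apply: leq_trans (szR N); rewrite leq_addr.
  rewrite (rnth N.+1); first by rewrite RS nth_cat ltnNge leq_addr /= addKn.
  by rewrite RS size_cat ltn_add2l.
have Z i j : size ru <= i -> j \notin J -> tvec (r i) j = 0.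
  move=> hi hj; rewrite /r /R nth_cat ltnNge hi /=.
  have hA := all_flat (iota 0 i.+1) (fun k => (Prs k).2.1).
  have hs : i - size ru < size (flatten (map rs (iota 0 i.+1))).
    have := szR i.+1; rewrite /R size_cat; lia.
  move/(all_nthP t0): hA => /(_ _ hs) /forallP /(_ j); rewrite hj /=; exact/eqP.
exists r; split.
  have [_ Hn] := fin_run_nth t0 (a 0) (fR 1).
  by have [] := Hn 0 (leq_trans (ltn0Sn _) (szR 1)).
split.
  move=> i; have [_ Hn] := fin_run_nth t0 (a 0) (fR i.+2).
  have hi1 : i.+1 < size (R i.+2) by apply: leq_trans (szR _); rewrite leq_addr.
  have hi0 : i < size (R i.+2) by apply: ltnW.
  have [h1 h2 _] := Hn i hi0; have [_ _ h3] := Hn i.+1 hi1.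
  rewrite (rnth _ _ hi0) (rnth _ _ hi1); split => //; split; last by rewrite h3.
  by rewrite h2 Wnth // -sizeR.
split.
  move=> N; have [_ [_ [/hasP [t tin tF] _]]] := Prs N.
  by have [i [Ni Ei]] := block N t tin; exists i; rewrite Ei.
exists (ext J (sumvec ru)); split => // j.
case: (boolP (j \in J)) => hj.
  split; first by rewrite /ext hj.
  move=> nIO; exfalso; apply: nIO => N.
  have [_ [_ [_ /subsetP /(_ j hj)]]] := Prs N; rewrite inE => /hasP [t tin tj].
  have [i [Ni Ei]] := block N t tin; exists i; split => //; rewrite Ei; exact/eqP.
split.
  move=> io; exfalso; have [i [hi nzi]] := io (size ru); exact: nzi (Z i j hi hj).
move=> _; exists (size ru); split; first by move=> i hi; apply: Z.
rewrite /ext (negbTE hj) /sumvec; congr Fin.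
rewrite (big_nth t0) big_mkord; apply: eq_bigr => i _.
have h0 : R 0 = ru by rewrite /R /= cats0.
by rewrite (rnth 0) h0.
Qed.

Theorem lemma7 (Sigma : finType) (L : olang Sigma) :
  LPBA_recognizable L ->
  exists (n : nat) (U V : 'I_n -> lang Sigma),
    (forall i, parikh_recognizable (U i)) /\
    (forall i, regular (V i)) /\
    (forall a, L a <-> exists i, concat_omega (U i) (omega_power (V i)) a).
Proof.
case=> Q [d [q0 [Delta [F [C [HC HL]]]]]].
pose T := (Q * {set 'I_d})%type.
exists #|{: T}|.
exists (fun i => Ulang q0 Delta C (enum_val i).1 (enum_val i).2).
exists (fun i => Vlang Delta F (enum_val i).1 (enum_val i).2).
split; first by move=> i; apply: U_parikh.
split; first by move=> i; apply: V_regular.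
move=> a; rewrite HL; split.
  move/fwd => [q [J H]]; exists (enum_rank ((q, J) : T)); by rewrite enum_rankK.
by case=> i /bwd.
Qed.
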